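(* For every $n \in \mathbb{N}$, there is a finite simple digraph $D$ with $\vec{\chi}(D) \geq n$ and $\omega(D) \leq 3$ such that $D$ has no induced directed cycle of odd length at least $5$.
   Context: A digraph is simple if for any two distinct vertices $u,v$ it has at most one of the edges $uv$, $vu$ (and no loops). The underlying undirected graph of a digraph $D$ has vertex set $V(D)$, with $u,v$ adjacent iff $uv$ or $vu$ is an edge of $D$. The clique number $\omega(D)$ of a digraph is the clique number of its underlying undirected graph. A digraph is acyclic if it contains no directed cycle. A $k$-dicoloring of $D$ is a map $f:V(D)\to\{1,\dots,k\}$ such that each color class induces an acyclic subdigraph; the dichromatic number $\vec{\chi}(D)$ is the least $k$ for which a $k$-dicoloring exists. An induced directed cycle is a directed cycle $v_1v_2\cdots v_\ell v_1$ whose vertex set induces in $D$ a subdigraph with exactly the edges $v_iv_{i+1}$ (indices mod $\ell$). *)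

(* Defs.v *)
From mathcomp Require Import all_boot.
Set Implicit Arguments. Unset Strict Implicit. Unset Printing Implicit Defensive.

Definition simple_digraph (T : finType) (E : rel T) : Prop :=
  forall u v : T, ~~ (E u v && E v u) /\ ~~ E u u.

Definition succ_mod (l : nat) (i : 'I_l) : nat := (i.+1 %% l)%N.

Definition dicycle_in (T : finType) (E : rel T) (S : pred T) (l : nat)
    (c : 'I_l -> T) : Prop :=
  (2 <= l)%N /\ injective c /\ (forall i, S (c i)) /\
  (forall i j : 'I_l, nat_of_ord j = succ_mod i -> E (c i) (c j)).

Definition acyclic_on (T : finType) (E : rel T) (S : pred T) : Prop :=
  forall (l : nat) (c : 'I_l -> T), ~ dicycle_in E S c.

Definition dicoloring (T : finType) (E : rel T) (k : nat) (f : T -> 'I_k) : Prop :=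
  forall a : 'I_k, acyclic_on E (fun v => f v == a).

Definition dichromatic_ge (T : finType) (E : rel T) (n : nat) : Prop :=
  forall k : nat, (k < n)%N -> forall f : T -> 'I_k, ~ dicoloring E f.

Definition adj (T : finType) (E : rel T) (u v : T) : bool := E u v || E v u.

Definition clique_number_le (T : finType) (E : rel T) (w : nat) : Prop :=
  forall K : {set T},
    (forall u v, u \in K -> v \in K -> u != v -> adj E u v) -> (#|K| <= w)%N.

Definition induced_dicycle (T : finType) (E : rel T) (l : nat) (c : 'I_l -> T) : Prop :=
  (2 <= l)%N /\ injective c /\
  (forall i j : 'I_l, E (c i) (c j) <-> nat_of_ord j = succ_mod i).

(* Main.v *)
Require Import Defs.
From mathcomp Require Import all_boot zify.
Set Implicit Arguments. Unset Strict Implicit. Unset Printing Implicit Defensive.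

Lemma inj_into (T Y : finType) (A : {set Y}) :
  #|T| <= #|A| -> exists g : {ffun T -> Y}, injectiveb g /\ forall u, g u \in A.
Proof.
move=> H.
exists [ffun u => enum_val (widen_ord H (enum_rank u))]; split.
  apply/injectiveP => u v; rewrite !ffunE => /enum_val_inj /(congr1 val) /= /val_inj.
  exact: enum_rank_inj.
by move=> u; rewrite ffunE; apply: enum_valP.
Qed.

Lemma count_bound (Y C : finType) (f : Y -> C) (I : {set C}) b :
  (forall y, f y \in I) -> (forall c, c \in I -> #|[set y | f y == c]| <= b) ->
  #|Y| <= #|I| * b.
Proof.
move=> HI Hb.
have -> : #|Y| = \sum_(y : Y) 1 by rewrite sum1_card.
rewrite (partition_big f (fun c => c \in I)) //=.
rewrite -sum_nat_const; apply: leq_sum => c cI.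
apply: leq_trans (Hb c cI).
rewrite -sum1_card; apply: eq_leq; apply: eq_bigl => y; by rewrite inE.
Qed.

Lemma triangle_not_acyclic (T : finType) (E : rel T) (S : pred T) (a b c : T) :
  E a b -> E b c -> E c a -> a != b -> b != c -> c != a -> S a -> S b -> S c ->
  ~ acyclic_on E S.
Proof.
move=> ab bc ca nab nbc nca Sa Sb Sc H.
apply: (H 3 (fun i => nth a [:: a; b; c] i)).
split; first by [].
split.
  move=> [[|[|[|i]]] Hi] [[|[|[|j]]] Hj] //= E1; apply: val_inj => //=;
  move: E1 nab nbc nca; try by move=> ->; rewrite eqxx.
  all: try by move=> -> _ ; rewrite eqxx.
  all: try by move=> -> _ _; rewrite eqxx.
  all: try by move=> -> ; rewrite eq_sym eqxx.
  all: try by move=> -> _; rewrite eq_sym eqxx.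
  all: try by move=> -> _ _; rewrite eq_sym eqxx.
split; first by move=> [[|[|[|i]]] Hi].
move=> [[|[|[|i]]] Hi] [[|[|[|j]]] Hj] //=; rewrite /succ_mod //=.
Qed.


Definition VT (T : finType) (N : nat) : finType :=
  ('I_N + (bool * ({ffun T -> 'I_N} * T)))%type.

Definition VE (T : finType) (E : rel T) (N : nat) : rel (VT T N) :=
  fun x y => match x, y with
  | inl _, inl _ => false
  | inl y0, inr (t, (h, v)) => t && injectiveb h && (h v == y0)
  | inr (t, (g, u)), inl y0 => ~~ t && injectiveb g && (g u == y0)
  | inr (t, (g, u)), inr (t', (g', u')) =>
      if t == t' then (g == g') && E u u'
      else t && injectiveb g && injectiveb g' && (g' u' == g u)
  end.
Arguments VE [T] E N.

Lemma VE_simple (T : finType) (E : rel T) N : simple_digraph E -> simple_digraph (VE E N).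
Proof.
move=> HS [y|[t [g u]]] [y'|[t' [g' u']]] /=; split => //.
all: try by case: t'; rewrite /= ?andbF.
all: try by case: t; rewrite /= ?andbF.
all: rewrite ?eqxx /=; try (by case: (HS u u)).
case: t; case: t' => //=; rewrite ?andbF //.
all: case: (g =P g') => [<-|ne] /=; rewrite ?eqxx /=; first (by case: (HS u u')).
all: by [].
Qed.

Lemma VE_copy (T : finType) (E : rel T) N t g u u' :
  VE E N (inr (t,(g,u))) (inr (t,(g,u'))) = E u u'.
Proof. by rewrite /= !eqxx. Qed.

Lemma copy_dicoloring (T : finType) (E : rel T) N k (F : VT T N -> 'I_k) t g :
  dicoloring (VE E N) F -> dicoloring E (fun u => F (inr (t,(g,u)))).
Proof.
move=> HF a l c [H2 [Hinj [HS Har]]].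
apply: (HF a l (fun i => inr (t,(g,c i)))).
split=> //; split; first by move=> i j [] /Hinj.
split=> // i j Hj; rewrite VE_copy; exact: Har.
Qed.


Definition tg (T : finType) N (x : VT T N) : option bool :=
  match x with inl _ => None | inr (t, _) => Some t end.
Definition key (T : finType) N (x : VT T N) : 'I_N :=
  match x with inl y => y | inr (_, (h, v)) => h v end.

Lemma adj_cross (T : finType) (E : rel T) N (w : VT T N) t g u :
  tg w != Some t -> adj (VE E N) w (inr (t,(g,u))) -> injectiveb g /\ g u = key w.
Proof.
case: w => [y|[t' [h v]]] /=.
  by rewrite /adj /=; case: t => _ /orP [] /andP [] /andP [] _ -> /eqP.
rewrite /adj /= => ne.
have -> : (t == t') = false by apply/negbTE; apply: contra ne => /eqP ->.
rewrite eq_sym.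
have -> : (t == t') = false by apply/negbTE; apply: contra ne => /eqP ->.
case/orP => [/andP [/andP [/andP [_ _] ig] /eqP e]|/andP [/andP [/andP [_ ig] _] /eqP e]] //.
Qed.

Lemma adj_same (T : finType) (E : rel T) N t g u g' u' :
  adj (VE E N) (inr (t,(g,u))) (inr (t,(g',u'))) -> g = g' /\ adj E u u'.
Proof.
rewrite /adj /= eqxx; case: (g =P g') => [<-|ne] /=; rewrite ?eqxx //.
by rewrite eq_sym; move/eqP: ne => /negbTE ->.
Qed.

Lemma VE_clique (T : finType) (E : rel T) N :
  clique_number_le E 3 -> clique_number_le (VE E N) 3.
Proof.
move=> HK K HC.
case A: ([exists w in K, tg w == None] ||
         ([exists w in K, tg w == Some false] && [exists w in K, tg w == Some true])).
- have inj : {in K &, injective (@tg T N)}.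
    move=> x y xK yK exy; apply/eqP; apply: contraT => nxy.
    have axy := HC x y xK yK nxy.
    case: x xK exy nxy axy => [x0|[t [g u]]] xK.
      by case: y yK => [y0|[? ?]] // yK _ _; rewrite /adj.
    case: y yK => [y0|[t' [g' u']]] yK //= [ett] nxy axy; subst t'.
    have [w wK wt] : exists2 w, w \in K & tg w != Some t.
      case/orP: A => [/existsP [w /andP [wK /eqP wt]]|/andP [/existsP [a /andP [aK /eqP at']] /existsP [b /andP [bK /eqP bt]]]].
        by exists w => //; rewrite wt.
      by case: t {axy nxy xK yK}; [exists a | exists b]; rewrite ?at' ?bt.
    have [g_eq _] := adj_same axy.
    subst g'.
    have wx : w != inr (t,(g,u)) by apply: contraNneq wt => ->.
    have wy : w != inr (t,(g,u')) by apply: contraNneq wt => ->.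
    have [ig e1] := adj_cross wt (HC _ _ wK xK wx).
    have [_ e2] := adj_cross wt (HC _ _ wK yK wy).
    have eu : u = u' by apply: (injectiveP _ ig); rewrite e1 e2.
    by move: nxy; rewrite eu eqxx.
  have H := @leq_card_in _ _ _ _ inj.
  by rewrite card_option card_bool in H.
- case: (set_0Vmem K) => [-> | [x0 x0K]]; first by rewrite cards0.
  have noY : forall y, inl y \in K -> False.
    move=> y yK; move: A; rewrite (_ : [exists w in K, _] = true) //.
    by apply/existsP; exists (inl y); rewrite yK.
  case: x0 x0K => [y0|[t [g u0]]] x0K; first by case: (noY y0 x0K).
  have tags : forall t' g' u', inr (t',(g',u')) \in K -> t' = t.
    move=> t' g' u' xK; apply/eqP; apply: contraFT A => ne; apply/orP; right.
    case: t t' ne x0K xK => [] [] // _ H1 H2; apply/andP; split; apply/existsP;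
      by [exists (inr (true,(g,u0))); rewrite H1 | exists (inr (false,(g',u'))); rewrite H2
         | exists (inr (true,(g',u'))); rewrite H2 | exists (inr (false,(g,u0))); rewrite H1].
  set K' := [set u | inr (t,(g,u)) \in K].
  have sub : K \subset [set (inr (t,(g,u)) : VT T N) | u in K'].
    apply/subsetP => x xK.
    case: x xK => [y|[t' [g' u']]] xK; first by case: (noY y xK).
    have tt' := tags _ _ _ xK; subst t'.
    have gg' : g' = g.
      case: (eqVneq (inr (t,(g,u0)) : VT T N) (inr (t,(g',u')))) => [[->]|ne] //.
      by have [] := adj_same (HC _ _ x0K xK ne).
    subst g'; apply/imsetP; exists u' => //; by rewrite inE.
  apply: leq_trans (subset_leq_card sub) _.
  apply: leq_trans (leq_imset_card _ _) _.
  apply: HK => u v; rewrite !inE => uK vK nuv.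
  have ne : (inr (t,(g,u)) : VT T N) != inr (t,(g,v)) by apply: contra nuv => /eqP [->].
  by have [] := adj_same (HC _ _ uK vK ne).
Qed.


Definition ordmod (l : nat) (Hl : 0 < l) (k : nat) : 'I_l := Ordinal (ltn_pmod k Hl).

Lemma ordmod_succ l (Hl : 0 < l) k : succ_mod (ordmod Hl k) = ordmod Hl k.+1.
Proof. by rewrite /succ_mod /= -addn1 modnDml addn1. Qed.

Lemma ordmod_val l (Hl : 0 < l) (i : 'I_l) : ordmod Hl i = i.
Proof. by apply: val_inj; rewrite /= modn_small. Qed.

Lemma ordmod_succ' l (Hl : 0 < l) k : ordmod Hl (succ_mod (ordmod Hl k)) = ordmod Hl k.+1.
Proof. by apply: val_inj; rewrite /= ordmod_succ /= modn_mod. Qed.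

Lemma cyc_const l (Hl : 0 < l) (w : 'I_l -> nat) :
  (forall i : 'I_l, w (ordmod Hl (succ_mod i)) <= w i) -> forall i j, w i = w j.
Proof.
move=> Hw.
have step : forall (i : 'I_l) m, w (ordmod Hl (i + m)) <= w i.
  move=> i; elim=> [|m IHm]; first by rewrite addn0 ordmod_val.
  apply: leq_trans _ IHm; rewrite addnS -ordmod_succ'.
  exact: Hw.
have gen : forall i j : 'I_l, w j <= w i.
  move=> i j; have := step i (j + l - i).
  have -> : ordmod Hl (i + (j + l - i)) = j.
    apply: val_inj => /=.
    have -> : i + (j + l - i) = j + l by have := ltn_ord i; lia.
    by rewrite modnDr modn_small.
  by [].
by move=> i j; apply/eqP; rewrite eqn_leq !gen.
Qed.

Lemma pred_ne l i : i < l -> 5 <= l -> (i + l.-1) %% l != (i + 2) %% l.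
Proof.
move=> il l5; rewrite eqn_modDl modn_small ?modn_small //; try lia.
Qed.


Lemma VE_induced (T : finType) (E : rel T) N :
  (forall l (c : 'I_l -> T), odd l -> 5 <= l -> ~ induced_dicycle E c) ->
  forall l (c : 'I_l -> VT T N), odd l -> 5 <= l -> ~ induced_dicycle (VE E N) c.
Proof.
move=> IH l c odl l5 [l2 [cinj carc]].
have Hl : 0 < l by lia.
pose nx := fun i : 'I_l => ordmod Hl (succ_mod i).
pose pv := fun i : 'I_l => ordmod Hl (i + l.-1).
have arc_nx : forall i, VE E N (c i) (c (nx i)).
  move=> i; apply/carc; rewrite /nx /= modn_small //; rewrite /succ_mod; exact: ltn_pmod.
have arc_pv : forall i, VE E N (c (pv i)) (c i).
  move=> i; apply/carc; rewrite /pv /succ_mod /= -addn1 modnDml addn1.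
  have -> : (i + l.-1).+1 = i + l by lia.
  by rewrite modnDr modn_small.
have noY : forall i y, c i <> inl y.
  move=> i y ciy.
  have := arc_pv i; have := arc_nx i; rewrite ciy.
  case Ex: (c (nx i)) => [?|[[] [h v]]] //=; case Ep: (c (pv i)) => [?|[[] [g u]]] //=.
  move=> /andP [ih /eqP hv] /andP [ig /eqP gu].
  have : VE E N (c (nx i)) (c (pv i)) by rewrite Ex Ep /= ih ig gu hv eqxx.
  move/carc; rewrite /pv /nx /= /succ_mod /= modn_mod -[(_ %% l).+1]addn1 modnDml (_ : i.+1 + 1 = i + 2); last by lia.
  by move/eqP; apply/negP; apply: pred_ne.
case E0: (c (ordmod Hl 0)) => [y|[t0 [g0 u0]]]; first by case: (noY _ _ E0).
pose pr (x : VT T N) : bool * ({ffun T -> 'I_N} * T) :=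
  match x with inl _ => (t0,(g0,u0)) | inr p => p end.
have cpr : forall i, c i = inr (pr (c i)).
  by move=> i; case Ec: (c i) => [y|p] //; case: (noY _ _ Ec).
pose w := fun i => nat_of_bool (pr (c i)).1.
have mono : forall i, w (ordmod Hl (succ_mod i)) <= w i.
  move=> i; have := arc_nx i; rewrite /nx /w (cpr i) (cpr (ordmod Hl (succ_mod i))).
  case: (pr (c i)) => t [g u]; case: (pr (c (ordmod Hl (succ_mod i)))) => t' [g' u'] /=.
  by case: t; case: t' => //=; rewrite andbF.
have tags : forall i, (pr (c i)).1 = t0.
  move=> i; have := cyc_const mono i (ordmod Hl 0); rewrite /w E0 /=.
  by case: (pr (c i)).1; case: (t0).
have gs : forall m, (pr (c (ordmod Hl m))).2.1 = g0.
  elim=> [|m IHm]; first by rewrite E0.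
  have := arc_nx (ordmod Hl m); rewrite /nx ordmod_succ' (cpr (ordmod Hl m)) (cpr (ordmod Hl m.+1)).
  have := tags (ordmod Hl m); have := tags (ordmod Hl m.+1); rewrite -IHm.
  case: (pr (c (ordmod Hl m))) => t [g u]; case: (pr (c (ordmod Hl m.+1))) => t' [g' u'] /= -> ->.
  by rewrite eqxx /= => /andP [/eqP].
pose uu := fun i => (pr (c i)).2.2.
have cform : forall i, c i = inr (t0, (g0, uu i)).
  move=> i; rewrite (cpr i) -(tags i) -(gs i) ordmod_val /uu.
  by case: (pr (c i)) => ? [? ?].
apply: (IH l uu odl l5); split => //; split.
  by move=> i j eij; apply: cinj; rewrite !cform eij.
by move=> i j; rewrite -carc !cform VE_copy.
Qed.


Lemma VE_color (T : finType) (E : rel T) n N :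
  (forall k (f : T -> 'I_k), dicoloring E f -> n <= #|[set f x | x : T]|) ->
  n * (2 * #|T|) < N ->
  forall k (F : VT T N -> 'I_k), dicoloring (VE E N) F -> n.+1 <= #|[set F x | x : VT T N]|.
Proof.
move=> IHc HN k F HF; rewrite ltnNge; apply/negP => Hm.
set I := [set F x | x : VT T N].
set s := #|T|.
have full : forall t g c, c \in I -> exists u, F (inr (t,(g,u))) = c.
  move=> t g c cI.
  pose fc := fun u => F (inr (t,(g,u))).
  have H1 := IHc _ fc (copy_dicoloring (t:=t) (g:=g) HF).
  have sub : [set fc u | u : T] \subset I.
    by apply/subsetP => _ /imsetP [u _ ->]; apply/imsetP; exists (inr (t,(g,u))).
  have eqI : [set fc u | u : T] = I.
    by apply/eqP; rewrite eqEcard sub; apply: leq_trans Hm H1.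
  by move: cI; rewrite -eqI => /imsetP [u _ ->]; exists u.
have bound : forall c, c \in I -> #|[set y : 'I_N | F (inl y) == c]| <= 2 * s.
  move=> c cI.
  set Yc := [set y : 'I_N | F (inl y) == c].
  set Bad := [set y in Yc | [forall x, VE E N x (inl y) ==> (F x != c)]].
  have hB : #|Bad| < s.
    rewrite ltnNge; apply/negP => /inj_into [g [ig gB]].
    have [u Fu] := full false g c cI.
    have := gB u; rewrite inE => /andP [_ /forallP /(_ (inr (false,(g,u))))].
    by rewrite /= ig eqxx Fu eqxx.
  have hG : #|Yc :\: Bad| < s.
    rewrite ltnNge; apply/negP => /inj_into [h [ih hG]].
    have [v Fv] := full true h c cI.
    have := hG v; rewrite !inE => /andP [Hnb Yv].
    move: Hnb; rewrite Yv /= negb_forall => /existsP [x]; rewrite negb_imply negbK => /andP [ax /eqP Fx].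
    case: x ax Fx => [y'|[[] [g u]]] //= /andP [ig /eqP guv] Fx.
    apply: (@triangle_not_acyclic _ (VE E N) (fun x => F x == c)
              (inr (false,(g,u))) (inl (h v)) (inr (true,(h,v)))); last exact: HF.
    all: rewrite /= ?ig ?ih ?guv ?eqxx ?Fx ?Fv //.
  have := cardsID Bad Yc.
  have : #|Yc :&: Bad| <= #|Bad| by apply: subset_leq_card; apply: subsetIr.
  move=> h1 h2; rewrite -h2 mul2n -addnn; apply: leq_add; [exact: leq_trans h1 (ltnW hB) | exact: ltnW hG].
have imI : forall y, F (inl y) \in I by move=> y; apply/imsetP; exists (inl y).
have := @count_bound _ _ (fun y : 'I_N => F (inl y)) I (2 * s) imI bound.
rewrite card_ord => H.
have : #|I| * (2 * s) <= n * (2 * s) by apply: leq_mul.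
lia.
Qed.


Fixpoint Dg (n : nat) : {T : finType & rel T} :=
  match n with
  | 0 => existT (fun T : finType => rel T) unit (fun _ _ => false)
  | m.+1 => let: existT T E := Dg m in
            existT (fun T : finType => rel T) (VT T (m * (2 * #|T|)).+1) (VE E _)
  end.

Definition Inv (n : nat) (T : finType) (E : rel T) : Prop :=
  simple_digraph E /\
  (forall k (f : T -> 'I_k), dicoloring E f -> n <= #|[set f x | x : T]|) /\
  clique_number_le E 3 /\
  (forall (l : nat) (c : 'I_l -> T), odd l -> (5 <= l)%N -> ~ induced_dicycle E c).

Arguments Inv n T E : clear implicits.

Lemma Dg_inv n : Inv n (projT1 (Dg n)) (projT2 (Dg n)).
Proof.
elim: n => [|m IH]; rewrite /Inv /=.
  split.
    by move=> u v.
  split; first by [].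
  split.
    move=> K _; apply: leq_trans (max_card _) _; by rewrite card_unit.
  move=> l c _ l5 [_ [_ carc]].
  have Hl : 0 < l by lia.
  have := carc (ordmod Hl 0) (ordmod Hl 1).
  rewrite /succ_mod /= !modn_small //; try lia.
move: IH; rewrite /Inv.
case: (Dg m) => T E [HS [HC [HK HI]]] /=.
split; first exact: VE_simple.
split; first by apply: VE_color => //.
split; first exact: VE_clique.
exact: VE_induced.
Qed.

Theorem theorem1p5 :
  forall n : nat,
    exists (T : finType) (E : rel T),
      simple_digraph E /\
      dichromatic_ge E n /\
      clique_number_le E 3 /\
      (forall (l : nat) (c : 'I_l -> T),
          odd l -> (5 <= l)%N -> ~ induced_dicycle E c).
Proof.
move=> n; have [HS [HC [HK HI]]] := Dg_inv n.
exists (projT1 (Dg n)), (projT2 (Dg n)); split => //; split => //.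
move=> k kn f Hf.
have := HC k f Hf.
have := max_card [set f x | x : projT1 (Dg n)].
rewrite card_ord; lia.
Qed.
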